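(* Let $G$ be a finite abelian group with dual group $\widehat G$, and let $F=(F(s,\sigma))_{s\in G,\sigma\in\widehat G}$ be its Fourier matrix, a unitary matrix whose columns $F(\cdot,\sigma)$ are the normalized characters, so that $|F(s,\sigma)|^2=1/|G|$ for all $s,\sigma$. Let $S\subseteq G$ and $\Sigma\subseteq\widehat G$ be symmetric subsets ($S=-S$, $\Sigma=\Sigma^{-1}$) with $|S|\ge|\Sigma|$. Let $P$ be the orthogonal projection of $\ell^2(G)$ onto $\mathrm{span}\{F(\cdot,\sigma):\sigma\in\Sigma\}$ and let $(Qf)(s)=\mathbbm{1}_S(s)f(s)$. Suppose $\mu_1\ge\mu_2\ge\cdots\ge\mu_{|\Sigma|}$ are the nonzero eigenvalues of $PQ$, with corresponding orthonormal eigenvectors $\varphi_1,\dots,\varphi_{|\Sigma|}$. Then for every $\sigma\in\widehat G$, $\sum_{\nu=1}^{|\Sigma|}\mu_\nu|F\varphi_\nu(\sigma)|^2=\frac{|S|}{|G|}\mathbbm{1}_\Sigma(\sigma),$ where $F\varphi(\sigma)=\sum_{s\in G}\varphi(s)\overline{F(s,\sigma)}$.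
   Context: $\ell^2(G)$ is the space of complex functions on $G$ with the standard inner product. $\mathbbm{1}_A$ denotes the indicator function of a set $A$. *)

(* Defs.v *)
From HB Require Import structures.
From mathcomp Require Export all_boot all_order all_algebra all_fingroup all_solvable all_field all_character.
Set Implicit Arguments. Unset Strict Implicit. Unset Printing Implicit Defensive.
Export Order.TTheory GRing.Theory Num.Theory.
Local Open Scope ring_scope.

(* The finite abelian group G is the whole finGroupType gT (written
   multiplicatively), with abelian [set: gT].  Its dual group is indexed by
   Iirr [set: gT]: for an abelian group the irreducible characters are exactly
   the homomorphisms G -> C^x. *)

Definition fourier (gT : finGroupType) (s : gT) (i : Iirr [set: gT]) : algC :=
  'chi[[set: gT]]_i s / sqrtC (#|gT|%:R).

Definition l2dot (gT : finGroupType) (f g : gT -> algC) : algC :=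
  \sum_(s : gT) f s * (g s)^*.

Definition fourierT (gT : finGroupType) (f : gT -> algC) (i : Iirr [set: gT]) : algC :=
  \sum_(s : gT) f s * (fourier s i)^*.

Definition mulInd (gT : finGroupType) (S : {set gT}) (f : gT -> algC) : gT -> algC :=
  fun s => if s \in S then f s else 0.

Definition is_orth_proj_span (gT : finGroupType) (Sigma : {set Iirr [set: gT]})
    (P : (gT -> algC) -> (gT -> algC)) : Prop :=
  forall f : gT -> algC,
    (exists c : Iirr [set: gT] -> algC,
        forall s, P f s = \sum_(i in Sigma) c i * fourier s i)
    /\ (forall i, i \in Sigma -> l2dot (fun s => f s - P f s) (fun s => fourier s i) = 0).

(* Main.v *)
Require Import Defs.
Local Open Scope ring_scope.

Section Aux.
Variable gT : finGroupType.

Lemma sqrtn_conj : (sqrtC (#|gT|%:R : algC))^* = sqrtC (#|gT|%:R).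
Proof. by apply: conj_Creal; apply: ger0_real; rewrite sqrtC_ge0 ler0n. Qed.

Lemma sqrtn_sq : sqrtC (#|gT|%:R : algC) * (sqrtC (#|gT|%:R))^* = #|gT|%:R.
Proof. by rewrite sqrtn_conj -expr2 sqrtCK. Qed.

Lemma ngt0 : (#|gT|%:R : algC) != 0.
Proof. by rewrite pnatr_eq0 -lt0n; apply/card_gt0P; exists 1%g. Qed.

Lemma fourier_mul s i j : fourier s i * (fourier s j)^* =
   'chi[[set: gT]]_i s * ('chi[[set: gT]]_j s)^* / #|gT|%:R.
Proof.
rewrite /fourier rmorphM /= fmorphV /= sqrtn_conj.
by rewrite mulrACA -invfM -expr2 sqrtCK.
Qed.


Lemma fourier_orth i j :
  l2dot (fun s : gT => fourier s i) (fun s : gT => fourier s j) = (i == j)%:R.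
Proof.
rewrite /l2dot.
under eq_bigr do rewrite fourier_mul.
rewrite -mulr_suml -(cfdot_irr i j) cfdotE cardsT mulrC.
congr (_ * _); apply: eq_bigl => x; by rewrite in_setT.
Qed.

Lemma fourier_norm (s : gT) i : abelian [set: gT] ->
  fourier s i * (fourier s i)^* = #|gT|%:R^-1.
Proof.
move=> ab; rewrite fourier_mul -normCK normC_lin_char ?in_setT //.
  by rewrite expr1n mul1r.
by move/char_abelianP: ab.
Qed.

Lemma l2dot_conj (f g : gT -> algC) : l2dot f g = (l2dot g f)^*.
Proof.
rewrite /l2dot rmorph_sum /=; apply: eq_bigr => s _.
by rewrite rmorphM /= conjCK mulrC.
Qed.

Lemma dot_span (Sigma : {set Iirr [set: gT]}) (d : Iirr [set: gT] -> algC) j :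
  l2dot (fun s : gT => \sum_(i in Sigma) d i * fourier s i) (fun s : gT => fourier s j)
  = (j \in Sigma)%:R * d j.
Proof.
rewrite /l2dot.
under eq_bigr do rewrite mulr_suml.
rewrite exchange_big /=.
under eq_bigr do (under eq_bigr do rewrite -mulrA; rewrite -mulr_sumr).
have E := fourier_orth; rewrite /l2dot in E.
under eq_bigr do rewrite E.
case: (boolP (j \in Sigma)) => hj.
  rewrite (bigD1 j) //= eqxx mulr1 big1 ?addr0 ?mul1r // => i /andP [_ hij].
  by rewrite (negbTE hij) mulr0.
rewrite mul0r big1 // => i hi.
have -> : (i == j) = false by apply/negbTE/eqP => e; rewrite -e hi in hj.
by rewrite mulr0.

Qed.
End Aux.

Theorem proposition1 (gT : finGroupType) (S : {set gT}) (Sigma : {set Iirr [set: gT]})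
    (P : (gT -> algC) -> (gT -> algC))
    (mu : 'I_#|Sigma| -> algC) (phi : 'I_#|Sigma| -> gT -> algC) :
  abelian [set: gT] ->
  (forall x, x \in S -> (x^-1)%g \in S) ->
  (forall i, i \in Sigma ->
     exists2 j, j \in Sigma & forall x, 'chi[[set: gT]]_j x = ('chi[[set: gT]]_i x)^-1) ->
  (#|Sigma| <= #|S|)%N ->
  is_orth_proj_span Sigma P ->
  (forall i j : 'I_#|Sigma|, (i <= j)%N -> mu j <= mu i) ->
  (forall i, mu i != 0) ->
  (forall i s, P (mulInd S (phi i)) s = mu i * phi i s) ->
  (forall i j, l2dot (phi i) (phi j) = (i == j)%:R) ->
  (forall (lam : algC) (f : gT -> algC), lam != 0 -> (exists s, f s != 0) ->
     (forall s, P (mulInd S f) s = lam * f s) -> exists i, lam = mu i) ->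
  forall sigma : Iirr [set: gT],
    \sum_(nu < #|Sigma|) mu nu * `|fourierT (phi nu) sigma| ^+ 2
      = #|S|%:R / #|gT|%:R * (sigma \in Sigma)%:R.
Proof.
move=> ab _ _ _ hP _ hmu0 heig horth _ sigma.
have [C hC] : exists C : 'I_#|Sigma| -> Iirr [set: gT] -> algC, forall nu s,
    P (mulInd S (phi nu)) s = \sum_(i in Sigma) C nu i * fourier s i.
  apply: (@fin_all_exists _ (fun _ => Iirr [set: gT] -> algC)
    (fun nu c => forall s, P (mulInd S (phi nu)) s = \sum_(i in Sigma) c i * fourier s i)) => nu.
  by have [[c hc] _] := hP (mulInd S (phi nu)); exists c.
pose c nu i := C nu i / mu nu.
have hphi : forall nu s, phi nu s = \sum_(i in Sigma) c nu i * fourier s i.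
  move=> nu s; apply: (mulfI (hmu0 nu)); rewrite -heig hC mulr_sumr.
  by apply: eq_bigr => i _; rewrite /c [RHS]mulrA [mu nu * _]mulrC divfK.
have hdot : forall nu j, l2dot (phi nu) (fun s => fourier s j) = (j \in Sigma)%:R * c nu j.
  move=> nu j; rewrite -dot_span /l2dot; apply: eq_bigr => s _; by rewrite hphi.
have horthc : forall nu nu', \sum_(i in Sigma) c nu i * (c nu' i)^* = (nu == nu')%:R.
  move=> nu nu'; rewrite -horth /l2dot.
  under [RHS]eq_bigr do rewrite hphi mulr_suml.
  rewrite exchange_big /=; apply: eq_bigr => i hi.
  under [RHS]eq_bigr do rewrite -mulrA.
  rewrite -mulr_sumr; congr (_ * _).
  have := @l2dot_conj _ (fun s : gT => fourier s i) (phi nu').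
  by rewrite hdot hi mul1r /l2dot => ->.
pose M : 'M[algC]_#|Sigma| := \matrix_(nu, k) c nu (enum_val k).
pose Mh : 'M[algC]_#|Sigma| := \matrix_(k, nu) (c nu (enum_val k))^*.
have hMM : M *m Mh = 1%:M.
  apply/matrixP => nu nu'; rewrite !mxE -horthc [RHS]big_enum_val.
  by apply: eq_bigr => k _; rewrite !mxE.
have hMhM := mulmx1C hMM.
have hcc : forall i j, i \in Sigma -> j \in Sigma ->
    \sum_nu (c nu i)^* * c nu j = (i == j)%:R.
  move=> i j hi hj.
  pose k := enum_rank_in hi i; pose l := enum_rank_in hi j.
  have ek : enum_val k = i := enum_rankK_in hi hi.
  have el : enum_val l = j := enum_rankK_in hi hj.
  have -> : (i == j) = (k == l) by rewrite -(inj_eq enum_val_inj) ek el.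
  have := congr1 (fun A : 'M[algC]_#|Sigma| => A k l) hMhM.
  rewrite /= !mxE => <-.
  by apply: eq_bigr => nu _; rewrite !mxE ek el.
pose A i j := \sum_(s in S) fourier s i * (fourier s j)^*.
have heigc : forall nu j, j \in Sigma -> mu nu * c nu j = \sum_(i in Sigma) c nu i * A i j.
  move=> nu j hj.
  have e1 : mu nu * c nu j = l2dot (P (mulInd S (phi nu))) (fun s => fourier s j).
    rewrite /l2dot; under eq_bigr do rewrite heig -mulrA.
    rewrite -mulr_sumr; congr (_ * _).
    by have := hdot nu j; rewrite hj mul1r /l2dot => ->.
  have e2 : l2dot (P (mulInd S (phi nu))) (fun s => fourier s j)
          = l2dot (mulInd S (phi nu)) (fun s => fourier s j).
    have := (hP (mulInd S (phi nu))).2 j hj; rewrite /l2dot.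
    under eq_bigr do rewrite mulrBl.
    by rewrite sumrB => /eqP; rewrite subr_eq0 => /eqP ->.
  rewrite e1 e2 /l2dot /mulInd /A.
  under [RHS]eq_bigr do rewrite mulr_sumr.
  rewrite exchange_big /= [RHS]big_mkcond /=; apply: eq_bigr => s _.
  case: ifP => hs; last by rewrite mul0r.
  by rewrite hphi mulr_suml; apply: eq_bigr => i _; rewrite mulrA.
have hA : A sigma sigma = #|S|%:R / #|gT|%:R.
  rewrite /A; under eq_bigr do rewrite fourier_norm //.
  by rewrite sumr_const [RHS]mulr_natl.
have hF : forall nu, fourierT (phi nu) sigma = (sigma \in Sigma)%:R * c nu sigma.
  by move=> nu; rewrite -hdot.
under eq_bigr do rewrite hF.
case: (boolP (sigma \in Sigma)) => hs; last first.
  rewrite mulr0 big1 // => nu _.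
  by rewrite mul0r normr0 expr2 !mulr0.
rewrite mulr1 -hA.
under eq_bigr do rewrite mul1r normCK mulrA heigc // mulr_suml.
rewrite exchange_big /= (bigD1 sigma) //= [X in _ + X]big1 ?addr0.
  under eq_bigr do rewrite mulrAC.
  rewrite -mulr_suml.
  under eq_bigr do rewrite mulrC.
  by rewrite hcc // eqxx mul1r.
move=> i /andP [hi hne].
under eq_bigr do rewrite mulrAC.
rewrite -mulr_suml.
under eq_bigr do rewrite mulrC.
by rewrite hcc // eq_sym (negbTE hne) mul0r.
Qed.
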